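(* Let $M$ be a connected split matroid of rank $k$ on $E=[n]$, and let $F$ and $G$ be two distinct proper cyclic flats of $M$ of ranks $r$ and $s$. Set $Q=\Delta_{k,n}\cap H^+(F,r)\cap H^+(G,s)$, $\alpha=|F\setminus G|$, $\beta=|G\setminus F|$, $\gamma=|F\cap G|$. If $F$ and $G$ form a modular pair, then \[ Q=\Delta_{\gamma,F\cap G}\times\Delta_{r-\gamma,F\setminus G}\times\Delta_{s-\gamma,G\setminus F}\times\Delta_{0,E\setminus(F\cup G)}\cong\Delta_{r-\gamma,\alpha}\times\Delta_{s-\gamma,\beta}, \] and $Q$ coincides with $\Delta_{k,n}\cap H(F,r)\cap H(G,s)$. Otherwise, $Q$ is empty.
   Context: For $A\subseteq E$ and $r\in\mathbb R$, $H^+(A,r)=\{x\in\mathbb R^E:\sum_{i\in A}x_i\ge r\}$, $H^-(A,r)=\{x:\sum_{i\in A}x_i\le r\}$ and $H(A,r)=H^+(A,r)\cap H^-(A,r)$. For a finite set $S$, $\Delta_{m,S}\subset\mathbb R^S$ is the convex hull of indicator vectors of $m$-subsets of $S$ and $\Delta_{m,N}=\Delta_{m,[N]}$; products over disjoint sets partitioning $E$ are regarded as subsets of $\mathbb R^E$. A cyclic flat is a flat that is a union of circuits; $(F,G)$ is a modular pair if $\mathrm{rk}F+\mathrm{rk}G=\mathrm{rk}(F\cup G)+\mathrm{rk}(F\cap G)$. A subset $A$ is stressed if $M|A$ and $M/A$ are uniform; its cover is the set of $k$-subsets $B$ with $|B\cap A|\ge \mathrm{rk}(A)+1$; relaxing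 $A$ means adding its cover to the set of bases. A connected matroid is split if relaxing all stressed subsets with nonempty cover yields a uniform matroid. *)

(* Defs.v *)
(* Matroids are given by their set of bases on a finite type. *)
From mathcomp Require Import all_boot all_order all_algebra.
Set Implicit Arguments. Unset Strict Implicit. Unset Printing Implicit Defensive.
Import Order.TTheory GRing.Theory Num.Theory.

Section Matroids.
Variable T : finType.
Implicit Types (Bs : {set {set T}}) (A B C F G X : {set T}).

Definition is_matroid Bs : Prop :=
  Bs != set0 /\
  forall B1 B2, B1 \in Bs -> B2 \in Bs -> forall x, x \in B1 :\: B2 ->
    exists y, y \in B2 :\: B1 /\ y |: (B1 :\ x) \in Bs.

Definition rk Bs A : nat := \max_(B in Bs) #|A :&: B|.

Definition indep Bs (I : {set T}) : bool := [exists B in Bs, I \subset B].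

Definition circuit Bs C : Prop :=
  ~~ indep Bs C /\ forall x, x \in C -> indep Bs (C :\ x).

Definition flat Bs F : Prop :=
  forall x, x \notin F -> rk Bs F < rk Bs (x |: F).

Definition cyclic Bs F : Prop :=
  forall x, x \in F -> exists C, [/\ circuit Bs C, x \in C & C \subset F].

Definition cyclic_flat Bs F : Prop := flat Bs F /\ cyclic Bs F.

Definition proper_subset F : Prop := F != set0 /\ F != setT.

Definition modular_pair Bs F G : Prop :=
  (rk Bs F + rk Bs G = rk Bs (F :|: G) + rk Bs (F :&: G))%N.

Definition connected Bs : Prop :=
  forall x y : T, x != y -> exists C, [/\ circuit Bs C, x \in C & y \in C].

Definition uniform_on (rkf : {set T} -> nat) (S : {set T}) : Prop :=
  forall X, X \subset S -> rkf X = minn #|X| (rkf S).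

(* M|A and M/A uniform; the contraction M/A has ground set E\A and
   rank function X |-> rk (X u A) - rk A *)
Definition stressed Bs A : Prop :=
  uniform_on (rk Bs) A /\
  uniform_on (fun X => (rk Bs (X :|: A) - rk Bs A)%N) (~: A).

Definition cover (k : nat) Bs A : {set {set T}} :=
  [set B : {set T} | (#|B| == k) && (rk Bs A < #|B :&: A|)%N].

(* connected, and relaxing all stressed subsets with nonempty cover
   yields the uniform matroid U_{k,E} *)
Definition split_matroid Bs (k : nat) : Prop :=
  connected Bs /\
  forall B, #|B| = k <->
    (B \in Bs \/ exists A, [/\ stressed Bs A, cover k Bs A != set0 & B \in cover k Bs A]).

End Matroids.

Section Polytopes.
Variables (R : realFieldType) (T : finType).
Local Open Scope ring_scope.

(* x restricted to S lies in Delta_{m,S}: convex hull of indicator vectors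
   of m-subsets of S *)
Definition hyp (m : int) (S : {set T}) (x : T -> R) : Prop :=
  exists lam : {set T} -> R,
    [/\ forall B, 0 <= lam B,
        forall B, lam B != 0 -> B \subset S /\ (#|B|%:Z = m),
        \sum_(B : {set T}) lam B = 1 &
        forall i, i \in S -> x i = \sum_(B : {set T}) lam B * (i \in B)%:R].

Definition Hplus (A : {set T}) (r : R) (x : T -> R) : Prop := r <= \sum_(i in A) x i.
Definition Hminus (A : {set T}) (r : R) (x : T -> R) : Prop := \sum_(i in A) x i <= r.
Definition Hyper (A : {set T}) (r : R) (x : T -> R) : Prop := Hplus A r x /\ Hminus A r x.

End Polytopes.

(* Main.v *)
Require Import Defs.
From mathcomp Require Import all_boot all_order all_algebra.
Import Order.TTheory GRing.Theory Num.Theory.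
From mathcomp Require Import zify ring lra.
Set Implicit Arguments. Unset Strict Implicit. Unset Printing Implicit Defensive.
Section MatroidFacts.
Variables (T : finType) (Bs : {set {set T}}) (k : nat).
Hypothesis HM : is_matroid Bs.
Hypothesis Hk : forall B, B \in Bs -> #|B| = k.

Lemma rk_ge (B X : {set T}) : B \in Bs -> #|X :&: B| <= rk Bs X.
Proof. by move=> HB; rewrite /rk; apply: (leq_bigmax_cond (F := fun B => #|X :&: B|)). Qed.

Lemma rk_wit (X : {set T}) : exists2 B, B \in Bs & rk Bs X = #|X :&: B|.
Proof.
have: 0 < #|Bs| by rewrite card_gt0; case: HM.
move=> /(eq_bigmax_cond (fun B => #|X :&: B|)) [B HB e]; by exists B.
Qed.

Lemma rk_mono (X Y : {set T}) : X \subset Y -> rk Bs X <= rk Bs Y.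
Proof.
move=> XY; have [B HB ->] := rk_wit X.
apply: leq_trans (rk_ge Y HB); apply: subset_leq_card; exact: setSI.
Qed.

Lemma rk_card (X : {set T}) : rk Bs X <= #|X|.
Proof. have [B HB ->] := rk_wit X; apply: subset_leq_card; exact: subsetIl. Qed.

Lemma rk_k (X : {set T}) : rk Bs X <= k.
Proof. have [B HB ->] := rk_wit X; rewrite -(Hk HB); apply: subset_leq_card; exact: subsetIr. Qed.

Lemma rkT : rk Bs setT = k.
Proof.
apply/eqP; rewrite eqn_leq rk_k /=.
have [B HB _] := rk_wit setT; have := rk_ge setT HB; by rewrite setTI Hk.
Qed.

Lemma rk_indep (I : {set T}) : rk Bs I = #|I| -> indep Bs I.
Proof.
have [B HB ->] := rk_wit I => h; apply/existsP; exists B; rewrite HB /=.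
have : I :&: B == I by rewrite eqEcard subsetIl h leqnn.
by move/eqP <-; exact: subsetIr.
Qed.

Lemma indep_sub (I J : {set T}) : indep Bs J -> I \subset J -> indep Bs I.
Proof.
move=> /existsP [B /andP [HB JB]] IJ; apply/existsP; exists B.
by rewrite HB (subset_trans IJ JB).
Qed.

Lemma ext (I W Bst : {set T}) : Bst \in Bs -> I \subset W -> forall B0, B0 \in Bs -> I \subset B0 ->
  exists2 B', B' \in Bs & I \subset B' /\ #|W :&: Bst| <= #|W :&: B'|.
Proof.
move=> HBst IW B0.
have: #|B0 :\: Bst| <= #|B0 :\: Bst| by [].
move: {2}#|B0 :\: Bst| => m; elim: m B0 => [|m IH] B0 Hm HB0 IB0.
- exists B0 => //; split => //.
  have e : B0 :\: Bst = set0 by apply/eqP; rewrite -cards_eq0 -leqn0.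
  have e1 := cardsID B0 Bst; have e2 := cardsID Bst B0.
  have e3 := cardsID B0 (W :&: Bst).
  have e5 := cardsID Bst (W :&: B0).
  rewrite (Hk HB0) in e2; rewrite (Hk HBst) in e1.
  have e4 : #|W :&: Bst :\: B0| <= #|Bst :\: B0| by apply: subset_leq_card; apply: setSD; exact: subsetIr.
  have e6 : W :&: Bst :&: B0 = W :&: B0 :&: Bst by rewrite setIAC.
  rewrite e cards0 in e2.
  have e7 : #|W :&: B0 :\: Bst| <= #|B0 :\: Bst| by apply: subset_leq_card; apply: setSD; exact: subsetIr.
  rewrite e cards0 in e7. rewrite setIC in e1. rewrite e6 in e3. lia.
- case: (boolP [exists x, (x \in B0 :\: Bst) && (x \notin W)]).
  + move=> /existsP [x /andP [Hx HxW]].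
    have [y [Hy HB1]] := HM.2 B0 Bst HB0 HBst x Hx.
    apply: (IH (y |: (B0 :\ x))) => //.
    * have : #|(y |: (B0 :\ x)) :\: Bst| < #|B0 :\: Bst|.
        apply: proper_card; apply/properP; split.
        - have yB : y \in Bst by move: Hy; rewrite !inE; case/andP.
          apply/subsetP => z; rewrite !inE.
          case/andP => zB; case/orP => [/eqP ezy|/andP [_ ->]]; last by rewrite andbT.
          by rewrite ezy yB in zB.
        - exists x => //; rewrite !inE eqxx /= ?andFb ?orbF.
          apply/negP => /andP [_ /eqP exy]; move: Hy; rewrite !inE -exy.
          by case/andP => _ hx; move: Hx; rewrite !inE hx.
      move=> h; lia.
    * apply/subsetP => z Hz; rewrite !inE (subsetP IB0 _ Hz) andbT.
      apply/orP; right; apply/eqP => ezx; move: HxW; rewrite -ezx.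
      by rewrite (subsetP IW _ Hz).
  + move=> hn; exists B0 => //; split => //.
    have hsub : B0 :\: Bst \subset W.
      apply/subsetP => z Hz; apply/negPn/negP => hz.
      by move/negP: hn; apply; apply/existsP; exists z; rewrite Hz hz.
    have e1 := cardsID B0 Bst; have e2 := cardsID Bst B0.
    have e3 := cardsID B0 (W :&: Bst).
    have e5 := cardsID Bst (W :&: B0).
    rewrite (Hk HB0) in e2; rewrite (Hk HBst) in e1.
    have e4 : #|W :&: Bst :\: B0| <= #|Bst :\: B0| by apply: subset_leq_card; apply: setSD; exact: subsetIr.
    have e6 : W :&: Bst :&: B0 = W :&: B0 :&: Bst by rewrite setIAC.
    have e7 : W :&: B0 :\: Bst = B0 :\: Bst.
      apply/setP => z; rewrite !inE; case: (boolP (z \in Bst)) => //= zS.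
      case: (boolP (z \in B0)); rewrite ?andbF ?andbT // => zB.
      by apply: (subsetP hsub); rewrite !inE zB zS.
    rewrite setIC in e1. rewrite e6 in e3. rewrite e7 in e5. lia.
Qed.


Lemma submod (X Y : {set T}) : rk Bs (X :|: Y) + rk Bs (X :&: Y) <= rk Bs X + rk Bs Y.
Proof.
have [B1 HB1 e1] := rk_wit (X :&: Y).
have [Bst HBst e2] := rk_wit (X :|: Y).
have IW : X :&: Y :&: B1 \subset X :|: Y.
  apply: subset_trans (subsetIl _ _) _; apply: subset_trans (subsetIl _ _) _; exact: subsetUl.
have [B' HB' [IB' hc]] := ext HBst IW HB1 (subsetIr _ _).
have h1 := rk_ge X HB'; have h2 := rk_ge Y HB'; have h3 := rk_ge (X :&: Y) HB'.
have h4 : #|X :&: Y :&: B1| <= #|X :&: Y :&: B'|.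
  apply: subset_leq_card; apply/subsetP => z hz; rewrite inE (subsetP IB' _ hz) andbT.
  by move: hz; rewrite inE; case/andP.
have h5 := cardsUI (X :&: B') (Y :&: B').
rewrite -setIUl in h5.
have e : X :&: B' :&: (Y :&: B') = X :&: Y :&: B' by rewrite setIACA setIid.
rewrite e in h5. lia.
Qed.

Lemma circ_rk (C : {set T}) x : circuit Bs C -> x \in C -> rk Bs (C :\ x) = #|C| - 1 /\ rk Bs C < #|C|.
Proof.
case=> hd hi xC; split.
- have [B /andP [HB sB]] := existsP (hi x xC).
  have := rk_card (C :\ x); have := rk_ge (C :\ x) HB.
  have : (C :\ x) :&: B = C :\ x by apply/setIidPl.
  move=> ->; have := cardsD1 x C; rewrite xC; lia.
- rewrite ltn_neqAle rk_card andbT; apply/negP => /eqP h.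
  by move/negP: hd; apply; exact: rk_indep.
Qed.

Lemma rm_circ (Y C : {set T}) x : circuit Bs C -> x \in C -> C \subset Y -> rk Bs (Y :\ x) = rk Bs Y.
Proof.
move=> hC xC CY; have [h1 h2] := circ_rk hC xC.
have hs := submod (Y :\ x) C.
have eU : (Y :\ x) :|: C = Y.
  apply/setP => z; rewrite !inE; case: (boolP (z \in C)) => zC; rewrite ?orbT ?orbF.
  - by rewrite (subsetP CY _ zC).
  - by case: eqP => // ezx; move: zC; rewrite ezx xC.
have eI : (Y :\ x) :&: C = C :\ x.
  apply/setP => z; rewrite !inE; case: (boolP (z \in C)) => zC; rewrite ?andbT ?andbF //.
  by rewrite (subsetP CY _ zC) andbT.
rewrite eU eI h1 in hs.
have := rk_mono (subD1set Y x).
have : 0 < #|C| by rewrite card_gt0; apply/set0Pn; exists x.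
lia.
Qed.

Lemma cyc_dep (Z : {set T}) : cyclic Bs Z -> Z != set0 -> rk Bs Z < #|Z|.
Proof.
move=> hc /set0Pn [z zZ]; have [C [hC zC CZ]] := hc z zZ.
rewrite ltn_neqAle rk_card andbT; apply/negP => /eqP h.
case: hC => hd _; move/negP: hd; apply; exact: indep_sub (rk_indep h) CZ.
Qed.

Lemma flat_lt (Z : {set T}) : flat Bs Z -> Z != setT -> rk Bs Z < k.
Proof.
move=> hf hT; have : ~~ (setT \subset Z) by rewrite subTset.
case/subsetPn => x _ xZ; apply: leq_trans (hf x xZ) _; exact: rk_k.
Qed.


Lemma rkCA (A : {set T}) : rk Bs (~: A :|: A) = k.
Proof. by rewrite setUC setUCr rkT. Qed.

Lemma pair_lem (A Z : {set T}) : stressed Bs A -> flat Bs Z -> cyclic Bs Z ->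
  Z != set0 -> Z != setT -> A != Z ->
  rk Bs (A :&: Z) = #|A :&: Z| /\ rk Bs (A :|: Z) = k.
Proof.
move=> [HA1 HA2] hf hc hZ0 hZT hAZ.
have hZd := cyc_dep hc hZ0; have hZk := flat_lt hf hZT.
have hAk := rk_k A.
case: (boolP (A \subset Z)) => hsub.
- exfalso.
  have : Z :\: A != set0.
    rewrite setD_eq0; apply/negP => hZA; move/negP: hAZ; apply.
    by rewrite eqEsubset hsub hZA.
  case/set0Pn => x; rewrite inE => /andP [xA xZ].
  have [C [hC xC CZ]] := hc x xZ.
  have e1 := rm_circ hC xC CZ.
  have h1 := HA2 (Z :\: A) (subsetDr _ _).
  have h2 := HA2 ((Z :\: A) :\ x) (subset_trans (subD1set _ _) (subsetDr _ _)).
  rewrite /= rkCA in h1 h2.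
  have eu1 : (Z :\: A) :|: A = Z.
    apply/setP => z; rewrite !inE; move: (subsetP hsub z).
    by case: (z \in A); case: (z \in Z) => //= /(_ isT).
  have eu2 : ((Z :\: A) :\ x) :|: A = Z :\ x.
    apply/setP => z; rewrite !inE; case: (z =P x) => [->|_] /=.
    - by rewrite (negbTE xA).
    - move: (subsetP hsub z).
      by case: (z \in A); case: (z \in Z) => //= /(_ isT).
  rewrite eu1 in h1; rewrite eu2 e1 in h2.
  have hc1 := cardsD1 x (Z :\: A); rewrite inE xA xZ /= in hc1.
  have := rk_mono hsub. lia.
- case/subsetPn: hsub => a aA aZ.
  have hI : #|A :&: Z| <= rk Bs A.
    rewrite leqNgt; apply/negP => hlt.
    have e1 := HA1 (A :&: Z) (subsetIl _ _).
    have hs := submod Z (a |: (A :&: Z)).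
    have eU : Z :|: (a |: (A :&: Z)) = a |: Z.
      apply/setP => z; rewrite !inE; case: (z \in Z); case: (z == a); by rewrite ?orbT ?orbF ?andbT ?andbF.
    have eI : Z :&: (a |: (A :&: Z)) = A :&: Z.
      apply/setP => z; rewrite !inE; case: (z =P a) => [->|_] /=.
      - by rewrite (negbTE aZ) /= andbF.
      - by case: (z \in Z); rewrite ?andbT ?andbF.
    rewrite eU eI e1 in hs.
    have h2 : rk Bs (a |: (A :&: Z)) <= rk Bs A.
      apply: rk_mono; apply/subsetP => z; rewrite !inE; case/orP => [/eqP -> //|/andP []//].
    have := hf a aZ. lia.
  have e1 := HA1 (A :&: Z) (subsetIl _ _).
  have hI' : rk Bs (A :&: Z) = #|A :&: Z| by rewrite e1; lia.
  split => //.
  have h1 := HA2 (Z :\: A) (subsetDr _ _).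
  rewrite /= rkCA in h1.
  have eu : (Z :\: A) :|: A = A :|: Z.
    apply/setP => z; rewrite !inE; by case: (z \in A); case: (z \in Z).
  rewrite eu in h1.
  have hs := submod A Z.
  have hcc := cardsID A Z. rewrite setIC in hcc.
  have := rk_mono (subsetUl A Z). have := rk_k (A :|: Z).
  lia.
Qed.


Lemma cf_stressed (Z : {set T}) : split_matroid Bs k -> flat Bs Z -> cyclic Bs Z ->
  Z != set0 -> Z != setT -> stressed Bs Z.
Proof.
move=> [_ hsp] hf hc hZ0 hZT.
have hZd := cyc_dep hc hZ0; have hZk := flat_lt hf hZT.
have [B0 HB0 e0] := rk_wit Z.
have hk0 := Hk HB0.
have : ~~ (Z \subset B0).
  apply/negP => hs; have : Z :&: B0 = Z by apply/setIidPl.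
  move=> e; rewrite e in e0; lia.
case/subsetPn => z zZ zB.
have : ~~ (B0 \subset Z).
  apply/negP => hs; have : Z :&: B0 = B0 by apply/setIidPr.
  move=> e; rewrite e in e0; lia.
case/subsetPn => y yB yZ.
pose B' := z |: (B0 :\ y).
have hB'k : #|B'| = k.
  rewrite /B' cardsU1 !inE (negbTE zB) ?andbF /=.
  have := cardsD1 y B0; rewrite yB; lia.
have eZ : Z :&: B' = z |: (Z :&: B0).
  apply/setP => w; rewrite !inE; case: (w =P z) => [->|_] /=; first by rewrite zZ.
  case: (w =P y) => [->|_] /=; first by rewrite (negbTE yZ).
  by [].
have hZB' : #|Z :&: B'| = (rk Bs Z).+1.
  by rewrite eZ cardsU1 !inE (negbTE zB) ?andbF /= e0.
case: (hsp B') => /(_ hB'k) [hB'|[A [hA _ hcov]]].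
- have := rk_ge Z hB'; lia.
- move: hcov; rewrite inE => /andP [_ hcov].
  case: (A =P Z) => [<- //|/eqP hAZ].
  exfalso.
  have [hI hU] := pair_lem hA hf hc hZ0 hZT hAZ.
  have hs := submod A Z; rewrite hI hU in hs.
  have hA0 := rk_ge A HB0.
  have hsub1 : B' :&: A \subset z |: (A :&: B0).
    apply/subsetP => w; rewrite /B' !inE.
    case: (w =P z) => //= _; case/andP => /andP [_ ->] ->; by [].
  have := subset_leq_card hsub1; rewrite cardsU1 => hc1.
  have zA : z \in A.
    apply/negPn/negP => zA.
    have : #|B' :&: A| <= #|A :&: B0|.
      apply: subset_leq_card; apply/subsetP => w; rewrite /B' !inE.
      case: (w =P z) => [->|_] /=; first by rewrite (negbTE zA) ?andbF.
      by case/andP => /andP [_ ->] ->.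
    move=> h; clear -h hcov hA0; lia.
  have yA : y \notin A.
    apply/negP => yA.
    have : #|B' :&: A| <= #|A :&: B0|.
      have hsub2 : B' :&: A \subset z |: ((A :&: B0) :\ y).
        apply/subsetP => w; rewrite /B' !inE.
        case: (w =P z) => //= _; case/andP => /andP [-> ->] ->; by [].
      apply: (leq_trans (subset_leq_card hsub2)).
      have hd := cardsD1 y (A :&: B0).
      have hy : y \in A :&: B0 by rewrite inE yA yB.
      rewrite hy in hd; rewrite cardsU1.
      have := leq_b1 (z \notin (A :&: B0) :\ y). clear -hd; lia.
    move=> h; clear -h hcov hA0; lia.
  have hc2 := cardsUI (A :&: B0) (Z :&: B0).
  rewrite -setIUl setIACA setIid in hc2.
  have hc3 : #|(A :|: Z) :&: B0| <= k - 1.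
    have : (A :|: Z) :&: B0 \subset B0 :\ y.
      apply/subsetP => w; rewrite !inE; case/andP => hw ->; rewrite andbT.
      apply/eqP => ewy; move: hw; rewrite ewy (negbTE yA) (negbTE yZ).
      by [].
    move/subset_leq_card; have := cardsD1 y B0; rewrite yB => h1 h2.
    clear -h1 h2 hk0; lia.
  have hc4 : #|A :&: Z :&: B0| <= #|A :&: Z| - 1.
    have : A :&: Z :&: B0 \subset (A :&: Z) :\ z.
      apply/subsetP => w; rewrite !inE; case/andP => /andP [-> ->] hw; rewrite !andbT.
      by apply/eqP => ewz; move: hw; rewrite ewz (negbTE zB).
    move/subset_leq_card; have := cardsD1 z (A :&: Z); rewrite !inE zA zZ /= => h1 h2.
    clear -h1 h2; lia.
  have := rk_card (A :&: Z). rewrite -e0 in hc2.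
  have hz0 : 0 < #|A :&: Z| by rewrite card_gt0; apply/set0Pn; exists z; rewrite inE zA zZ.
  have hb := leq_b1 (z \notin A :&: B0).
  move=> h; clear -h hc1 hb hz0 hc2 hc3 hc4 hs hA0 hcov hZk; lia.
Qed.

Lemma key_facts (F G : {set T}) : split_matroid Bs k ->
  cyclic_flat Bs F -> cyclic_flat Bs G -> proper_subset F -> proper_subset G -> F != G ->
  [/\ rk Bs (F :&: G) = #|F :&: G|, rk Bs (F :|: G) = k &
      k + #|F :&: G| <= rk Bs F + rk Bs G].
Proof.
move=> hsp [hfF hcF] [hfG hcG] [hF0 hFT] [hG0 hGT] hFG.
have hsF := cf_stressed hsp hfF hcF hF0 hFT.
have [hI hU] := pair_lem hsF hfG hcG hG0 hGT hFG.
split => //; have := submod F G; rewrite hI hU; lia.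
Qed.

End MatroidFacts.

Local Open Scope ring_scope.

Section Poly.
Variables (R : realFieldType) (T : finType).

Lemma natz_R (n : nat) : ((n%:Z)%:~R : R) = n%:R.
Proof. by []. Qed.

Lemma sum_bool (A B : {set T}) : \sum_(i in A) (((i \in B) : nat)%:R : R) = #|A :&: B|%:R.
Proof.
rewrite (big_setID B) /= [X in _ + X]big1 ?addr0; last first.
  by move=> i; rewrite inE => /andP [/negbTE -> _].
rewrite (eq_bigr (fun _ => 1)); last by move=> i; rewrite inE => /andP [_ ->].
by rewrite sumr_const.
Qed.

Lemma hyp_HS (m : int) (S : {set T}) (x : T -> R) : hyp m S x ->
  (forall i, i \in S -> 0 <= x i <= 1) /\ \sum_(i in S) x i = m%:~R.
Proof.
case=> lam [h0 hsz h1 hx]; split.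
- move=> i iS; rewrite hx //; apply/andP; split.
  + by apply: sumr_ge0 => B _; apply: mulr_ge0 => //; exact: ler0n.
  + rewrite -[X in _ <= X]h1; apply: ler_sum => B _.
    by case: (i \in B) => /=; rewrite ?mulr1n ?mulr0n ?mulr1 ?mulr0 ?lexx ?h0.
- rewrite (eq_bigr (fun i => \sum_B lam B * ((i \in B) : nat)%:R)); last by move=> i iS; exact: hx.
  rewrite exchange_big /=.
  transitivity (\sum_(B : {set T}) lam B * m%:~R).
    apply: eq_bigr => B _; rewrite -mulr_sumr.
    case: (lam B =P 0) => [->|/eqP hn]; first by rewrite !mul0r.
    have [BS hB] := hsz B hn; congr (_ * _).
    by rewrite sum_bool -hB natz_R (setIidPr BS).
  by rewrite -mulr_suml h1 mul1r.
Qed.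


Lemma sum01 (A : {set T}) (x : T -> R) : (forall i, i \in A -> x i = 0 \/ x i = 1) ->
  \sum_(i in A) x i = #|[set i in A | x i == 1]|%:R.
Proof.
move=> h.
rewrite (eq_bigr (fun i => ((i \in [set j | x j == 1]) : nat)%:R)); last first.
  move=> i iA; rewrite inE; case: (h i iA) => ->.
  - by rewrite eq_sym oner_eq0 /= mulr0n.
  - by rewrite eqxx /= mulr1n.
rewrite sum_bool; congr (_%:R); apply: eq_card => i; by rewrite !inE.
Qed.

Lemma HS_int (m : int) (S : {set T}) (x : T -> R) :
  (forall i, i \in S -> x i = 0 \/ x i = 1) -> \sum_(i in S) x i = m%:~R -> hyp m S x.
Proof.
move=> h hs; pose B0 := [set i in S | x i == 1].
exists (fun B => ((B == B0) : nat)%:R); split.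
- move=> B; exact: ler0n.
- move=> B; case: (B =P B0) => [->|]; last by rewrite /= mulr0n eqxx.
  move=> _; split; first by apply/subsetP => i; rewrite inE => /andP [].
  apply: (@intr_inj R); by rewrite natz_R -hs sum01.
- rewrite (bigD1 B0) //= eqxx big1 ?addr0 //; move=> B /negbTE -> /=; by rewrite mulr0n.
- move=> i iS; rewrite (bigD1 B0) //= eqxx big1 ?addr0; last first.
    by move=> B /negbTE -> /=; rewrite mulr0n mul0r.
  rewrite mulr1n mul1r inE iS /=; case: (h i iS) => ->.
  + by rewrite eq_sym oner_eq0 /= mulr0n.
  + by rewrite eqxx /= mulr1n.
Qed.

Lemma comb (m : int) (S : {set T}) (x y z : T -> R) (a b : R) : 0 < a -> 0 < b ->
  hyp m S y -> hyp m S z -> (forall l, l \in S -> x l = (a * y l + b * z l) / (a + b)) ->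
  hyp m S x.
Proof.
move=> ha hb [ly [hy0 hys hy1 hyx]] [lz [hz0 hzs hz1 hzx]] hx.
have hab : a + b != 0 by apply/lt0r_neq0; exact: addr_gt0.
have key : forall c : {set T} -> R, \sum_B ((a * ly B + b * lz B) / (a + b)) * c B =
   (a * \sum_B ly B * c B + b * \sum_B lz B * c B) / (a + b).
  move=> c; rewrite !mulr_sumr -big_split /= mulr_suml; apply: eq_bigr => B _.
  by field.
exists (fun B => (a * ly B + b * lz B) / (a + b)); split.
- move=> B; apply: divr_ge0; last by apply: ltW; exact: addr_gt0.
  by apply: addr_ge0; apply: mulr_ge0 => //; apply: ltW.
- move=> B hB; case: (ly B =P 0) => [e1|/eqP e1]; last exact: hys.
  case: (lz B =P 0) => [e2|/eqP e2]; last exact: hzs.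
  by move: hB; rewrite e1 e2 !mulr0 addr0 mul0r eqxx.
- have := key (fun _ => 1); rewrite !(eq_bigr _ (fun B _ => mulr1 _)) hy1 hz1 => ->.
  by rewrite !mulr1 divff.
- move=> i iS; rewrite hx // key -hyx // -hzx //.
Qed.


Definition fracs (S : {set T}) (x : T -> R) := [set i in S | (0 < x i) && (x i < 1)].

Lemma notfrac (S : {set T}) (x : T -> R) i : i \in S -> 0 <= x i <= 1 ->
  i \notin fracs S x -> x i = 0 \/ x i = 1.
Proof.
move=> iS /andP [h0 h1]; rewrite inE iS /=.
case: (ltrP 0 (x i)) => /= hp; case: (ltrP (x i) 1) => //= hq _.
- by right; apply/eqP; rewrite eq_le h1 hq.
- by left; apply/eqP; rewrite eq_le h0 hp.
- by left; apply/eqP; rewrite eq_le h0 hp.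
Qed.

Lemma step (S : {set T}) (x : T -> R) i0 j0 t : i0 \in S -> j0 \in S -> i0 != j0 ->
  i0 \in fracs S x -> j0 \in fracs S x -> (forall i, i \in S -> 0 <= x i <= 1) ->
  0 < t -> t <= 1 - x i0 -> t <= x j0 -> (t = 1 - x i0 \/ t = x j0) ->
  let y := fun l => if l == i0 then x l + t else if l == j0 then x l - t else x l in
  [/\ (forall i, i \in S -> 0 <= y i <= 1), \sum_(i in S) y i = \sum_(i in S) x i &
      (#|fracs S y| < #|fracs S x|)%N].
Proof.
move=> iS jS hij hfi hfj hb ht ht1 ht2 ht3 y.
have hyi : y i0 = x i0 + t by rewrite /y eqxx.
have hyj : y j0 = x j0 - t by rewrite /y eq_sym (negbTE hij) eqxx.
have hyo : forall l, l != i0 -> l != j0 -> y l = x l.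
  by move=> l h1 h2; rewrite /y (negbTE h1) (negbTE h2).
have [hi0 hi1] : 0 <= x i0 /\ x i0 <= 1 by move/andP: (hb i0 iS).
have [hj0 hj1] : 0 <= x j0 /\ x j0 <= 1 by move/andP: (hb j0 jS).
split.
- move=> l lS; case: (l =P i0) => [->|/eqP h1]; first by rewrite hyi; apply/andP; split; lra.
  case: (l =P j0) => [->|/eqP h2]; first by rewrite hyj; apply/andP; split; lra.
  by rewrite hyo //; exact: hb.
- rewrite (bigD1 i0) //= (bigD1 j0) /=; last by rewrite jS eq_sym hij.
  rewrite [in RHS](bigD1 i0) //= [in RHS](bigD1 j0) /=; last by rewrite jS eq_sym hij.
  rewrite hyi hyj (eq_bigr x); last by move=> l /andP [/andP [_ h1] h2]; exact: hyo.
  lra.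
- apply: proper_card; apply/properP; split.
  + apply/subsetP => l; case: (l =P i0) => [->//|/eqP h1].
    case: (l =P j0) => [->//|/eqP h2].
    by rewrite !inE hyo.
  + case: ht3 => e.
    * exists i0 => //; rewrite inE iS hyi /=; apply/negP => /andP [_ h]; lra.
    * exists j0 => //; rewrite inE jS hyj /=; apply/negP => /andP [h _]; lra.
Qed.


Lemma HS_hyp (m : int) (S : {set T}) (x : T -> R) :
  (forall i, i \in S -> 0 <= x i <= 1) -> \sum_(i in S) x i = m%:~R -> hyp m S x.
Proof.
suff H : forall N (x : T -> R), (#|fracs S x| <= N)%N -> (forall i, i \in S -> 0 <= x i <= 1) ->
    \sum_(i in S) x i = m%:~R -> hyp m S x.
  by move=> hb hs; apply: (H _ x (leqnn _)).
elim=> [|N IH] {}x hN hb hs.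
  apply: HS_int hs => i iS; apply: notfrac iS (hb i iS) _.
  by move: hN; rewrite leqn0 cards_eq0 => /eqP ->; rewrite inE.
case: (set_0Vmem (fracs S x)) => [e0|[i0 hi0]].
  apply: HS_int hs => i iS; apply: notfrac iS (hb i iS) _.
  by rewrite e0 inE.
have i0S : i0 \in S by move: hi0; rewrite inE => /andP [].
have [j0 hj0 hij] : exists2 j0, j0 \in fracs S x & i0 != j0.
  case: (boolP [exists j, (j \in fracs S x) && (i0 != j)]).
  - by move/existsP => [j /andP [h1 h2]]; exists j.
  - move=> hn; exfalso.
    have hall : forall j, j \in S :\ i0 -> x j = 0 \/ x j = 1.
      move=> j; rewrite !inE => /andP [hji jS]; apply: notfrac jS (hb j jS) _.
      apply/negP => hj; move/negP: hn; apply; apply/existsP; exists j; by rewrite hj eq_sym hji.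
    move: hs; rewrite (big_setD1 i0 i0S) /= sum01 // => e.
    have ex : x i0 = (m - (#|[set i in S :\ i0 | x i == 1]|)%:Z)%:~R.
      by rewrite intrB natz_R -e addrK.
    move: hi0; rewrite inE i0S /= ex ltr0z ltrz1; lia.
have j0S : j0 \in S by move: hj0; rewrite inE => /andP [].
have [hi1 hi2] : 0 < x i0 /\ x i0 < 1 by move: hi0; rewrite inE i0S /= => /andP [].
have [hj1 hj2] : 0 < x j0 /\ x j0 < 1 by move: hj0; rewrite inE j0S /= => /andP [].
pose tp := if 1 - x i0 <= x j0 then 1 - x i0 else x j0.
have [tp1 tp2 tp3 tp4] : [/\ 0 < tp, tp <= 1 - x i0, tp <= x j0 & tp = 1 - x i0 \/ tp = x j0].
  rewrite /tp; case: ifP => h.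
  - by split; [lra|lra|lra|left].
  - move/negbT: h; rewrite -ltNge => h; split; [lra|lra|lra|right] => //.
pose tm := if x i0 <= 1 - x j0 then x i0 else 1 - x j0.
have [tm1 tm2 tm3 tm4] : [/\ 0 < tm, tm <= 1 - x j0, tm <= x i0 & tm = 1 - x j0 \/ tm = x i0].
  rewrite /tm; case: ifP => h.
  - by split; [lra|lra|lra|right].
  - move/negbT: h; rewrite -ltNge => h; split; [lra|lra|lra|left] => //.
have hji : j0 != i0 by rewrite eq_sym.
have [hy1 hy2 hy3] := step i0S j0S hij hi0 hj0 hb tp1 tp2 tp3 tp4.
have [hz1 hz2 hz3] := step j0S i0S hji hj0 hi0 hb tm1 tm2 tm3 tm4.
apply: (comb (a := tm) (b := tp) tm1 tp1 (IH _ _ hy1 _) (IH _ _ hz1 _)).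
- by rewrite -ltnS; apply: leq_trans hy3 hN.
- by rewrite hy2.
- by rewrite -ltnS; apply: leq_trans hz3 hN.
- by rewrite hz2.
- move=> l lS /=; have hne : tm + tp != 0 by apply/lt0r_neq0; exact: addr_gt0.
  case: (l =P i0) => [->|/eqP h1]; first by rewrite ?eqxx ?(negbTE hij) ?(negbTE hji); field; try exact: hne.
  case: (l =P j0) => [->|/eqP h2]; first by rewrite ?eqxx ?(negbTE hij) ?(negbTE hji); field; try exact: hne.
  rewrite ?(negbTE h1) ?(negbTE h2); field; try exact: hne.
Qed.


Lemma sum_bounds (A : {set T}) (x : T -> R) : (forall i, i \in A -> 0 <= x i <= 1) ->
  0 <= \sum_(i in A) x i <= #|A|%:R.
Proof.
move=> h; apply/andP; split.
- by apply: sumr_ge0 => i /h /andP [].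
- rewrite -sumr_const; apply: ler_sum => i /h /andP [].
  by [].
Qed.

Lemma decomp (F G : {set T}) (x : T -> R) :
  [/\ \sum_(i in F) x i = \sum_(i in F :&: G) x i + \sum_(i in F :\: G) x i,
      \sum_(i in G) x i = \sum_(i in F :&: G) x i + \sum_(i in G :\: F) x i &
      \sum_(i in setT) x i = \sum_(i in F :&: G) x i + \sum_(i in F :\: G) x i
          + \sum_(i in G :\: F) x i + \sum_(i in ~: (F :|: G)) x i].
Proof.
have e5 : (F :|: G) :&: G = G by apply/setIidPr; exact: subsetUr.
have e6 : (F :|: G) :\: G = F :\: G by rewrite setDUl setDv setU0.
have e1 : \sum_(i in F) x i = \sum_(i in F :&: G) x i + \sum_(i in F :\: G) x i
  by rewrite (big_setID G).
have e2 : \sum_(i in G) x i = \sum_(i in F :&: G) x i + \sum_(i in G :\: F) x i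
  by rewrite (big_setID F) setIC.
have e4 : \sum_(i in F :|: G) x i = \sum_(i in G) x i + \sum_(i in F :\: G) x i
  by rewrite (big_setID G) e5 e6.
have e3 : \sum_(i in setT) x i = \sum_(i in F :|: G) x i + \sum_(i in ~: (F :|: G)) x i
  by rewrite (big_setID (F :|: G)) setTI setTD.
split => //; rewrite e3 e4 e2; lra.
Qed.

End Poly.

Unset Implicit Arguments. Set Strict Implicit. Set Printing Implicit Defensive.

Theorem mainTheorem3 (R : realFieldType) (n k : nat) (Bs : {set {set 'I_n}})
    (F G : {set 'I_n}) :
  is_matroid Bs -> (forall B, B \in Bs -> #|B| = k) -> split_matroid Bs k ->
  cyclic_flat Bs F -> cyclic_flat Bs G -> proper_subset F -> proper_subset G ->
  F != G ->
  let r := rk Bs F in let s := rk Bs G in let gamma := #|F :&: G| in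
  let Q := fun x : 'I_n -> R =>
    [/\ hyp k%:Z setT x, Hplus F r%:R x & Hplus G s%:R x] in
  (modular_pair Bs F G ->
     forall x : 'I_n -> R,
       (Q x <-> [/\ hyp gamma%:Z (F :&: G) x, hyp (r%:Z - gamma%:Z) (F :\: G) x,
                    hyp (s%:Z - gamma%:Z) (G :\: F) x & hyp 0 (~: (F :|: G)) x])
       /\ (Q x <-> [/\ hyp k%:Z setT x, Hyper F r%:R x & Hyper G s%:R x]))
  /\ (~ modular_pair Bs F G -> forall x : 'I_n -> R, ~ Q x).
Proof.
move=> hM hk hsp hcF hcG hpF hpG hFG r s gamma Q.
have [hI hU hineq] := key_facts hM hk hsp hcF hcG hpF hpG hFG.
have Qfacts : forall x : 'I_n -> R, Q x ->
   let a := \sum_(i in F :&: G) x i in let b := \sum_(i in F :\: G) x i in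
   let c := \sum_(i in G :\: F) x i in let d := \sum_(i in ~: (F :|: G)) x i in
   [/\ (forall i, 0 <= x i <= 1), a + b + c + d = k%:R, r%:R <= a + b, s%:R <= a + c &
       a <= gamma%:R /\ 0 <= d].
  move=> x [hx hF hG] a b c d.
  have [hb hs] := hyp_HS hx.
  have [e1 e2 e3] := decomp F G x.
  have hb' : forall i, 0 <= x i <= 1 by move=> i; apply: hb; rewrite inE.
  have /andP [_ ha] := sum_bounds (A := F :&: G) (fun i _ => hb' i).
  have /andP [hd _] := sum_bounds (A := ~: (F :|: G)) (fun i _ => hb' i).
  split => //.
  - by rewrite -e3 hs.
  - by rewrite /a /b -e1.
  - by rewrite /a /c -e2.
split.
- rewrite /modular_pair hI hU => hmod.
  have hrs : (r + s = k + gamma)%N by rewrite /r /s /gamma hmod addnC.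
  have hrsR : r%:R + s%:R = k%:R + gamma%:R :> R by rewrite -!natrD hrs.
  move=> x.
  have forward : Q x -> [/\ (forall i, 0 <= x i <= 1),
      \sum_(i in F :&: G) x i = gamma%:R, \sum_(i in F :\: G) x i = r%:R - gamma%:R,
      \sum_(i in G :\: F) x i = s%:R - gamma%:R & \sum_(i in ~: (F :|: G)) x i = 0].
    move=> hQ; have [hb h1 h2 h3 [h4 h5]] := Qfacts x hQ.
    split => //; lra.
  split; split.
  + move=> hQ; have [hb e1 e2 e3 e4] := forward hQ.
    split; apply: HS_hyp => //; try (by move=> i _; exact: hb).
    * by rewrite e2 intrB.
    * by rewrite e3 intrB.
  + case=> h1 h2 h3 h4.
    have [b1 s1] := hyp_HS h1; have [b2 s2] := hyp_HS h2.
    have [b3 s3] := hyp_HS h3; have [b4 s4] := hyp_HS h4.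
    have [e1 e2 e3] := decomp F G x.
    rewrite intrB in s2; rewrite intrB in s3.
    split.
    * apply: HS_hyp.
      - move=> i _; case: (boolP (i \in F)) => iF; case: (boolP (i \in G)) => iG.
        + by apply: b1; rewrite inE iF iG.
        + by apply: b2; rewrite inE iF iG.
        + by apply: b3; rewrite inE iF iG.
        + by apply: b4; rewrite !inE (negbTE iF) (negbTE iG).
      - rewrite e3 s1 s2 s3 s4 /=. rewrite natz_R. 
        have : (0 : int)%:~R = 0 :> R by [].
        move=> ->; lra.
    * rewrite /Hplus e1 s1 s2 /=; lra.
    * rewrite /Hplus e2 s1 s3 /=; lra.
  + move=> hQ; have [hb e1 e2 e3 e4] := forward hQ.
    case: hQ => hx hF hG; split => //.
    * have [f1 f2 f3] := decomp F G x.
      rewrite /Hyper /Hplus /Hminus f1 e1 e2; split; lra.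
    * have [f1 f2 f3] := decomp F G x.
      rewrite /Hyper /Hplus /Hminus f2 e1 e3; split; lra.
  + by case=> hx [hF _] [hG _]; split.
- move=> hnm x hQ.
  have hlt : (k + gamma < r + s)%N.
    rewrite ltn_neqAle; apply/andP; split; last by rewrite /r /s /gamma.
    apply/negP => /eqP e; apply: hnm; rewrite /modular_pair hI hU.
    by rewrite /r /s /gamma in e; rewrite -e addnC.
  have hltR : k%:R + gamma%:R + 1 <= r%:R + s%:R :> R.
    have h : ((k + gamma + 1)%:R <= (r + s)%:R :> R) by rewrite ler_nat addn1.
    by rewrite !natrD mulr1n in h.
  have [hb h1 h2 h3 [h4 h5]] := Qfacts x hQ.
  move: hltR h1 h2 h3 h4 h5; clear; move=> hltR h1 h2 h3 h4 h5.
  lra.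
Qed.
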